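(* Let $f:[\frac13,2]\to[\frac13,2]$ be defined by $f(x)=2x$ if $x\in[\frac13,1)$ and $f(x)=\frac{x}{3}$ if $x\in[1,2]$. For every nonempty open interval $I\subseteq[\frac13,2]$ there exists an integer $N$ such that for every $x\in[\frac13,2]$ and every $n\ge0$ with $f^n(x)\in I$, there is $m$ with $n<m\le n+N$ and $f^m(x)\in I$; i.e. the number of iterations of $f$ between two successive visits of an orbit to $I$ is bounded uniformly. *)

(* Defs.v *)
From Stdlib Require Import Reals Lra.
Open Scope R_scope.

(* The map f on [1/3,2]: f x = 2x on [1/3,1), f x = x/3 on [1,2].
   Extended to all of R by the same case split (values outside [1/3,2]
   are never used, since [1/3,2] is f-invariant). *)
Definition f (x : R) : R :=
  if Rlt_dec x 1 then 2 * x else x / 3.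

Fixpoint f_iter (n : nat) (x : R) : R :=
  match n with
  | O => x
  | S k => f (f_iter k x)
  end.

(* Main.v *)
Require Import Defs.
From Stdlib Require Import Reals Lra Lia ZArith.
Open Scope R_scope.

Definition al := ln 2.
Definition L := ln 2 + ln 3.
Definition rot (d t : R) := if Rlt_dec (t + d) L then t + d else t + d - L.
Definition r (t : R) := rot al t.
Fixpoint it (g : R -> R) (n : nat) (t : R) : R :=
  match n with O => t | S k => g (it g k t) end.

Lemma ln_pos_gt1 x : 1 < x -> 0 < ln x.
Proof. intros. rewrite <- ln_1. apply ln_increasing; lra. Qed.
Lemma ln_le' x y : 0 < x -> x <= y -> ln x <= ln y.
Proof. intros. destruct (Req_dec x y). subst; lra. left; apply ln_increasing; lra. Qed.

Lemma al_pos : 0 < al. Proof. apply ln_pos_gt1; lra. Qed.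
Lemma ln3_pos : 0 < ln 3. Proof. apply ln_pos_gt1; lra. Qed.
Lemma al_lt_L : al < L. Proof. unfold L, al; generalize ln3_pos; lra. Qed.
Lemma L_pos : 0 < L. Proof. generalize al_pos al_lt_L; lra. Qed.

Lemma it_add g n m t : it g (n + m) t = it g n (it g m t).
Proof. induction n; simpl; congruence. Qed.
Lemma it_S' g j u : it g (S j) u = it g j (g u).
Proof. replace (S j) with (j + 1)%nat by lia. rewrite it_add. reflexivity. Qed.
Lemma it_mul g j K t : it g (j * K) t = it (it g K) j t.
Proof. induction j; simpl. reflexivity. rewrite it_add, IHj. reflexivity. Qed.

Lemma rot_cong d t : exists z, rot d t - (t + d) = IZR z * L.
Proof. unfold rot; destruct Rlt_dec; [exists 0%Z | exists (-1)%Z]; simpl; lra. Qed.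

Lemma rot_range d t : 0 <= d < L -> 0 <= t < L -> 0 <= rot d t < L.
Proof. intros; unfold rot; destruct Rlt_dec; lra. Qed.

Lemma r_range t : 0 <= t <= L -> 0 <= r t < L.
Proof. generalize al_pos al_lt_L; intros; unfold r, rot; destruct Rlt_dec; lra. Qed.

Lemma riter_range n t : 0 <= t <= L -> 0 <= it r (S n) t < L.
Proof. intros H; induction n; simpl in *. apply r_range; lra. apply r_range; lra. Qed.

Lemma riter_range0 n t : 0 <= t < L -> 0 <= it r n t < L.
Proof. intros H; destruct n. simpl; lra. apply riter_range; lra. Qed.

Lemma riter_cong n t : exists z, it r n t - (t + INR n * al) = IZR z * L.
Proof.
  induction n. exists 0%Z; simpl; lra.
  destruct IHn as [z2 H2]. destruct (rot_cong al (it r n t)) as [z1 H1].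
  exists (z1 + z2)%Z. change (it r (S n) t) with (rot al (it r n t)). rewrite plus_IZR, S_INR. lra.
Qed.

Lemma cong_unique x y z : 0 <= x < L -> 0 <= y < L -> x - y = IZR z * L -> x = y.
Proof.
  intros Hx Hy H. generalize L_pos; intro.
  destruct (Z.lt_trichotomy z 0) as [h|[h|h]].
  - assert (IZR z <= -1) by (apply IZR_le; lia). nra.
  - subst. simpl in H. lra.
  - assert (1 <= IZR z) by (apply IZR_le; lia). nra.
Qed.

Lemma mod3_pow2 K : (2 ^ K mod 3 = 1 \/ 2 ^ K mod 3 = 2)%nat.
Proof.
  induction K. simpl; auto.
  rewrite Nat.pow_succ_r'. rewrite Nat.Div0.mul_mod by lia.
  destruct IHK as [-> | ->]; simpl; auto.
Qed.

Lemma mod3_pow6 z : (6 ^ (S z) mod 3 = 0)%nat.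
Proof. rewrite Nat.pow_succ_r'. rewrite Nat.Div0.mul_mod by lia. reflexivity. Qed.

Lemma irr K z : (1 <= K)%nat -> INR K * al <> IZR z * L.
Proof.
  intros HK H. generalize al_pos L_pos; intros.
  assert (1 <= INR K) by (apply (le_INR 1); lia).
  destruct (Z_lt_le_dec 0 z) as [hz|hz].
  2:{ assert (IZR z <= 0) by (apply IZR_le; lia). nra. }
  destruct (Z_of_nat_complete z) as [z' ->]; [lia|].
  rewrite <- INR_IZR_INZ in H.
  destruct z' as [|z']; [simpl in hz; lia|].
  assert (E : Rpower 2 (INR K) = Rpower 6 (INR (S z'))).
  { unfold Rpower. f_equal. unfold al, L in H.
    replace 6 with (2*3) by lra. rewrite ln_mult by lra. lra. }
  rewrite !Rpower_pow in E by lra.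
  assert (E2 : (2 ^ K = 6 ^ (S z'))%nat).
  { apply INR_eq. rewrite !pow_INR. replace (INR 2) with 2 by (simpl; lra). replace (INR 6) with 6 by (simpl; lra). exact E. }
  generalize (mod3_pow2 K) (mod3_pow6 z'). rewrite E2. lia.
Qed.

Lemma noper K t : (1 <= K)%nat -> it r K t <> t.
Proof.
  intros HK E. destruct (riter_cong K t) as [z H]. rewrite E in H.
  apply (irr K (- z) HK). rewrite opp_IZR. lra.
Qed.

Lemma step K t : 0 <= t < L -> it r K t = rot (it r K 0) t.
Proof.
  intros Ht.
  destruct (riter_cong K t) as [z1 H1]. destruct (riter_cong K 0) as [z2 H2].
  destruct (rot_cong (it r K 0) t) as [z3 H3].
  assert (R0 : 0 <= it r K 0 < L) by (apply riter_range0; generalize L_pos; lra).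
  apply cong_unique with (z1 - z2 - z3)%Z.
  - apply riter_range0; auto.
  - apply rot_range; auto.
  - rewrite !minus_IZR. lra.
Qed.
Section G.
Lemma g_range g d (Hd : 0 < d < L) (Hg : forall t, 0 <= t < L -> g t = rot d t) n t :
  0 <= t < L -> 0 <= it g n t < L.
Proof.
  intros Ht; induction n; simpl; auto. rewrite Hg by auto. apply rot_range; lra.
Qed.

Lemma lemA g d (Hd : 0 < d < L) (Hg : forall t, 0 <= t < L -> g t = rot d t) c e :
  0 <= c -> e <= L -> d < e - c -> forall n u, 0 <= u <= c -> c - u < INR n * d ->
  exists j, (1 <= j <= n)%nat /\ c < it g j u < e.
Proof.
  intros Hc He Hde n. induction n; intros u Hu Hn.
  - simpl in Hn. lra.
  - assert (Gu : g u = u + d).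
    { rewrite Hg by lra. unfold rot. destruct Rlt_dec; lra. }
    destruct (Rlt_le_dec c (u + d)).
    + exists 1%nat. split. lia. simpl. lra.
    + rewrite S_INR in Hn. destruct (IHn (u + d)) as [j [Hj1 Hj2]]; [lra | lra |].
      exists (S j). split. lia. rewrite it_S', Gu. auto.
Qed.

Lemma lemB g d (Hd : 0 < d < L) (Hg : forall t, 0 <= t < L -> g t = rot d t) e :
  d < e -> forall n u, 0 <= u < L -> L - u <= INR n * d ->
  exists j, (1 <= j <= n)%nat /\ it g j u < e.
Proof.
  intros Hde n. induction n; intros u Hu Hn.
  - simpl in Hn. lra.
  - rewrite S_INR in Hn.
    destruct (Rlt_le_dec (u + d) L).
    + assert (Gu : g u = u + d) by (rewrite Hg by lra; unfold rot; destruct Rlt_dec; lra).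
      destruct (Rlt_le_dec (u + d) e).
      * exists 1%nat. split. lia. simpl. lra.
      * destruct (IHn (u + d)) as [j [Hj1 Hj2]]; [lra | lra |].
        exists (S j). split. lia. rewrite it_S', Gu. auto.
    + assert (Gu : g u = u + d - L) by (rewrite Hg by lra; unfold rot; destruct Rlt_dec; lra).
      exists 1%nat. split. lia. simpl. lra.
Qed.

Lemma lemHit g d (Hd : 0 < d < L) (Hg : forall t, 0 <= t < L -> g t = rot d t) c e :
  0 <= c -> c < e -> e <= L -> d < e - c -> forall n, L <= INR n * d ->
  forall u, 0 <= u < L -> exists j, (1 <= j <= n + n)%nat /\ c < it g j u < e.
Proof.
  intros Hc Hce He Hde n Hn u Hu.
  destruct (lemB g d Hd Hg e ltac:(lra) n u Hu ltac:(lra)) as [j1 [Hj1 Hv]].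
  assert (Rv := g_range g d Hd Hg j1 u Hu).
  destruct (Rlt_le_dec c (it g j1 u)).
  - exists j1. split. lia. lra.
  - destruct (lemA g d Hd Hg c e Hc He Hde n (it g j1 u) ltac:(lra) ltac:(lra)) as [j2 [Hj2 Hw]].
    exists (j2 + j1)%nat. split. lia. rewrite it_add. auto.
Qed.

Lemma lemC g d eta (Hd : 0 < d < L) (Hg : forall t, 0 <= t < L -> g t = rot d t) :
  0 < eta -> d = L - eta -> forall n u, 0 <= u < L -> u <= INR n * eta ->
  exists m, it g m u < eta.
Proof.
  intros He Hde n. induction n; intros u Hu Hn.
  - exists 0%nat. simpl in *. lra.
  - destruct (Rlt_le_dec u eta).
    + exists 0%nat. simpl; lra.
    + assert (Gu : g u = u - eta) by (rewrite Hg by lra; unfold rot; destruct Rlt_dec; lra).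
      rewrite S_INR in Hn.
      destruct (IHn (u - eta)) as [m Hm]; [lra | lra |].
      exists (S m). rewrite it_S', Gu. auto.
Qed.
End G.

Lemma pigeon M : forall b : nat -> nat, (forall k, (k <= M)%nat -> (b k < M)%nat) ->
  exists i j, (i < j <= M)%nat /\ b i = b j.
Proof.
  induction M; intros b Hb.
  - specialize (Hb 0%nat ltac:(lia)). lia.
  - destruct (Classical_Prop.classic (exists k, (k <= M)%nat /\ b k = b (S M))) as [[k [Hk Hk2]]|Hn].
    + exists k, (S M). split. lia. auto.
    + set (q0 := b (S M)).
      assert (Hq0 : (q0 < S M)%nat) by (apply Hb; lia).
      set (b' := fun k => if Nat.eq_dec (b k) M then q0 else b k).
      destruct (IHM b') as [i [j [Hij Hb']]].
      * intros k Hk. unfold b'. assert (b k < S M)%nat by (apply Hb; lia).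
        assert (b k <> q0) by (intro; apply Hn; exists k; auto).
        destruct Nat.eq_dec; lia.
      * exists i, j. split. lia. unfold b' in Hb'.
        assert (b i <> q0) by (intro; apply Hn; exists i; split; [lia|auto]).
        assert (b j <> q0) by (intro; apply Hn; exists j; split; [lia|auto]).
        destruct (Nat.eq_dec (b i) M), (Nat.eq_dec (b j) M); lia.
Qed.

Lemma arch a b : 0 < a -> 0 < b -> exists n : nat, a < INR n * b.
Proof.
  intros Ha Hb. destruct (archimed_cor1 (b / a)) as [n [H1 H2]].
  { apply Rdiv_lt_0_compat; auto. }
  exists n. assert (Hn : 0 < INR n) by (apply lt_0_INR; auto).
  assert (H3 : 1 < INR n * (b / a)).
  { apply Rmult_lt_compat_l with (r := INR n) in H1; auto.
    rewrite Rinv_r in H1 by lra. lra. }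
  unfold Rdiv in H3.
  apply Rmult_lt_compat_l with (r := a) in H3; auto.
  replace (a * (INR n * (b * / a))) with (INR n * b) in H3 by (field; lra). lra.
Qed.
Lemma small_step eps : 0 < eps -> exists K, (1 <= K)%nat /\ 0 < it r K 0 < eps.
Proof.
  intros Heps. generalize L_pos; intro HL.
  destruct (arch L eps HL Heps) as [N HN].
  assert (HN0 : 0 < INR N).
  { destruct N. simpl in HN. lra. apply lt_0_INR; lia. }
  set (w := L / INR N).
  assert (Hw : 0 < w) by (unfold w; apply Rdiv_lt_0_compat; auto).
  assert (Hwe : w < eps).
  { unfold w. apply Rmult_lt_reg_l with (INR N); auto. field_simplify; lra. }
  assert (HNw : INR N * w = L) by (unfold w; field; lra).
  set (p := fun k => it r k 0).
  assert (Hp : forall k, 0 <= p k < L) by (intro; apply riter_range0; lra).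
  set (z := fun k => p k / w).
  assert (Hz : forall k, 0 <= z k < INR N).
  { intro k. unfold z. destruct (Hp k). split.
    apply Rmult_le_pos; [lra| left; apply Rinv_0_lt_compat; auto].
    apply Rmult_lt_reg_r with w; auto. unfold Rdiv. rewrite Rmult_assoc, Rinv_l by lra. lra. }
  assert (Hpz : forall k, p k = z k * w) by (intro; unfold z; field; lra).
  set (bk := fun k => Z.to_nat (Int_part (z k))).
  assert (HI : forall k, (0 <= Int_part (z k))%Z /\ (Int_part (z k) < Z.of_nat N)%Z).
  { intro k. destruct (base_Int_part (z k)). destruct (Hz k). split.
    - assert (-1 < Int_part (z k))%Z. { apply lt_IZR. simpl. lra. } lia.
    - apply lt_IZR. rewrite <- INR_IZR_INZ. lra. }
  destruct (pigeon N bk) as [i [j [Hij Hb]]].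
  { intros k _. unfold bk. destruct (HI k). lia. }
  assert (HIe : Int_part (z i) = Int_part (z j)).
  { unfold bk in Hb. destruct (HI i), (HI j). lia. }
  assert (Hzz : z j - z i < 1 /\ z i - z j < 1).
  { destruct (base_Int_part (z i)), (base_Int_part (z j)). rewrite HIe in *. lra. }
  assert (Hpp : p j - p i < w /\ p i - p j < w).
  { rewrite !Hpz. destruct Hzz. split; nra. }
  set (K := (j - i)%nat).
  assert (HK : (1 <= K)%nat) by (unfold K; lia).
  assert (Hpj : p j = it r K (p i)).
  { unfold p. rewrite <- it_add. f_equal. unfold K; lia. }
  assert (Hne : p j <> p i) by (rewrite Hpj; apply noper; auto).
  set (d0 := it r K 0).
  assert (Hd0 : 0 <= d0 < L) by (apply riter_range0; lra).
  assert (Hg : forall t, 0 <= t < L -> it r K t = rot d0 t) by (intros; apply step; auto).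
  rewrite Hg in Hpj by auto. unfold rot in Hpj. destruct (Hp i), (Hp j).
  destruct (Rlt_dec (p i + d0) L).
  -
    exists K. split; auto. fold d0. split; [|lra].
    destruct Hd0 as [[h|h] _]; auto. exfalso. apply Hne. lra.
  - set (eta := p i - p j).
    assert (Heta : 0 < eta) by (unfold eta; lra).
    assert (Hd0' : 0 < d0 < L) by (unfold eta in *; lra).
    destruct (arch L eta HL Heta) as [n1 Hn].
    destruct (lemC (it r K) d0 eta Hd0' Hg Heta ltac:(unfold eta; lra) n1 (it r K 0)
      ltac:(fold d0; lra) ltac:(fold d0; lra)) as [m Hm].
    rewrite <- it_S', <- it_mul in Hm.
    exists (S m * K)%nat. split. nia.
    assert (0 <= it r (S m * K) 0 < L) by (apply riter_range0; lra).
    split; [|unfold eta in *; lra].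
    destruct H3 as [[h|h] _]; auto. exfalso. apply (noper (S m * K) 0). nia. auto.
Qed.

Lemma hit_r c e : 0 <= c -> c < e -> e <= L ->
  exists N, forall u, 0 <= u < L -> exists j, (1 <= j <= N)%nat /\ c < it r j u < e.
Proof.
  intros Hc Hce He. generalize L_pos; intro HL.
  destruct (small_step (e - c)) as [K [HK Hd]]; [lra|].
  set (d := it r K 0) in *.
  assert (Hd' : 0 < d < L) by (assert (0 <= d < L) by (apply riter_range0; lra); lra).
  assert (Hg : forall t, 0 <= t < L -> it r K t = rot d t) by (intros; apply step; auto).
  destruct (arch L d HL ltac:(lra)) as [n Hn].
  exists ((n + n) * K)%nat. intros u Hu.
  destruct (lemHit (it r K) d Hd' Hg c e Hc Hce He ltac:(lra) n ltac:(lra) u Hu) as [j [Hj Hh]].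
  exists (j * K)%nat. rewrite it_mul. split; auto. nia.
Qed.
Lemma f_pos y : 0 < y -> 0 < Defs.f y.
Proof. intros; unfold Defs.f; destruct Rlt_dec; lra. Qed.
Lemma f_iter_pos n y : 0 < y -> 0 < f_iter n y.
Proof. intros; induction n; simpl; auto. apply f_pos; auto. Qed.

Lemma phi_f y : 0 < y -> ln (3 * Defs.f y) = r (ln (3 * y)).
Proof.
  intros Hy. unfold r, rot, al, L, Defs.f.
  rewrite (ln_mult 3 y) by lra.
  destruct (Rlt_dec y 1), (Rlt_dec (ln 3 + ln y + ln 2) (ln 2 + ln 3)).
  - replace (3 * (2 * y)) with (2 * (3 * y)) by ring. rewrite !ln_mult by lra. lra.
  - exfalso. assert (ln y < ln 1) by (apply ln_increasing; lra). rewrite ln_1 in H. lra.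
  - exfalso. assert (ln y < 0) by lra. rewrite <- ln_1 in H. apply ln_lt_inv in H; lra.
  - replace (3 * (y / 3)) with y by field. lra.
Qed.

Lemma phi_iter n y : 0 < y -> ln (3 * f_iter n y) = it r n (ln (3 * y)).
Proof.
  intros Hy. induction n; simpl; auto. rewrite phi_f by (apply f_iter_pos; auto). congruence.
Qed.

Theorem mainTheorem3 :
  forall a b : R, 1/3 <= a -> a < b -> b <= 2 ->
  exists N : nat,
    forall (x : R) (n : nat), 1/3 <= x <= 2 ->
      a < f_iter n x < b ->
      exists m : nat, (n < m <= n + N)%nat /\ a < f_iter m x < b.
Proof.
  intros a b Ha Hab Hb.
  assert (Hc : 0 <= ln (3 * a)) by (rewrite <- ln_1; apply ln_le'; lra).
  assert (Hce : ln (3 * a) < ln (3 * b)) by (apply ln_increasing; lra).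
  assert (He : ln (3 * b) <= L).
  { unfold L. rewrite Rplus_comm, <- ln_mult by lra. apply ln_le'; lra. }
  destruct (hit_r _ _ Hc Hce He) as [N HN].
  exists (S N). intros x n Hx Hn.
  assert (Hx0 : 0 < x) by lra.
  assert (Ht : 0 <= ln (3 * x) <= L).
  { split. rewrite <- ln_1; apply ln_le'; lra.
    unfold L. rewrite Rplus_comm, <- ln_mult by lra. apply ln_le'; lra. }
  destruct (HN (it r (S n) (ln (3 * x)))) as [j [Hj Hh]].
  { apply riter_range; auto. }
  exists (j + S n)%nat. split. lia.
  rewrite <- it_add, <- phi_iter in Hh by auto.
  assert (P := f_iter_pos (j + S n) x Hx0).
  destruct Hh as [h1 h2].
  apply ln_lt_inv in h1; [|lra|lra]. apply ln_lt_inv in h2; [|lra|lra]. lra.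
Qed.
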